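(* Let $n\ge 2$, let $\mathcal{S}\subseteq(\mathbb{C}^d)^{\otimes n}$ be the permutation-symmetric subspace, let $|\psi\rangle\in\mathcal{S}$, and let $B$ be an invertible $d\times d$ complex matrix. Then $B_{(1)}B_{(2)}^{-1}|\psi\rangle=|\psi\rangle$ if and only if $B_{(1)}|\psi\rangle\in\mathcal{S}$.
   Context: $\mathcal{S}$ is the set of vectors in $(\mathbb{C}^d)^{\otimes n}$ invariant under all permutations of the $n$ tensor factors. For a $d\times d$ matrix $X$ and $1\le k\le n$, $X_{(k)}$ denotes $\mathbb{I}\otimes\cdots\otimes\mathbb{I}\otimes X\otimes\mathbb{I}\otimes\cdots\otimes\mathbb{I}$ with $X$ in the $k$-th position of the $n$-fold tensor product. *)

(* Defs.v *)
From HB Require Import structures.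
From mathcomp Require Import all_boot all_order all_algebra all_fingroup.
From mathcomp Require Import complex reals.
Set Implicit Arguments. Unset Strict Implicit. Unset Printing Implicit Defensive.
Import Order.TTheory GRing.Theory Num.Theory.
Local Open Scope ring_scope.

(* Multi-indices of the standard product basis of (C^d)^{⊗n}. *)
Definition midx (n d : nat) := {ffun 'I_n -> 'I_d}.

(* A vector of (F^d)^{⊗n}: its coordinates in the product basis. *)
Definition tens (F : Type) (n d : nat) := {ffun midx n d -> F}.

Definition upd n d (x : midx n d) (k : 'I_n) (j : 'I_d) : midx n d :=
  [ffun i => if i == k then j else x i].

(* X_(k) = I ⊗ ... ⊗ X (k-th slot) ⊗ ... ⊗ I acting on psi. *)
Definition op_at (F : pzRingType) n d (X : 'M[F]_d) (k : 'I_n)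
    (psi : tens F n d) : tens F n d :=
  [ffun x : midx n d => \sum_(j < d) X (x k) j * psi (upd x k j)].

Definition symmetric_tens (F : Type) n d (psi : tens F n d) : Prop :=
  forall (s : 'S_n) (x : midx n d), psi [ffun i => x (s i)] = psi x.

(* Main.v *)
Require Import Defs.
From HB Require Import structures.
From mathcomp Require Import all_boot all_order all_algebra all_fingroup.
From mathcomp Require Import complex reals.
Local Open Scope ring_scope.
Import GRing.Theory.
Set Implicit Arguments. Unset Strict Implicit.

Section Aux.
Variables (F : comPzRingType) (n d : nat).

Definition Pm (s : 'S_n) (psi : tens F n d) : tens F n d :=
  [ffun x : midx n d => psi [ffun i => x (s i)]].

Lemma upd_upd (x : midx n d) k j l : upd (upd x k j) k l = upd x k l.
Proof. by apply/ffunP=> i; rewrite !ffunE; case: eqP. Qed.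

Lemma upd_at (x : midx n d) k j : upd x k j k = j.
Proof. by rewrite ffunE eqxx. Qed.

Lemma upd_neq (x : midx n d) k j l : l != k -> upd x k j l = x l.
Proof. by move=> h; rewrite ffunE (negbTE h). Qed.

Lemma upd_comm (x : midx n d) k j l m : k != l ->
  upd (upd x k j) l m = upd (upd x l m) k j.
Proof.
move=> h; apply/ffunP=> i; rewrite !ffunE.
case: (eqVneq i l) => [->|_]; last by [].
by rewrite eq_sym (negbTE h).
Qed.

Lemma op_atM (A C : 'M[F]_d) (k : 'I_n) (psi : tens F n d) :
  op_at A k (op_at C k psi) = op_at (A *m C) k psi.
Proof.
apply/ffunP=> x; rewrite !ffunE.
under eq_bigr => j _ do rewrite ffunE upd_at big_distrr /=.
rewrite exchange_big /=; apply: eq_bigr => l _.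
rewrite mxE big_distrl /=; apply: eq_bigr => j _.
by rewrite upd_upd mulrA.
Qed.

Lemma op_at1 (k : 'I_n) (psi : tens F n d) : op_at (1%:M : 'M[F]_d) k psi = psi.
Proof.
apply/ffunP=> x; rewrite ffunE (bigD1 (x k)) //= mxE eqxx mul1r.
rewrite big1 ?addr0.
  by congr (psi _); apply/ffunP=> i; rewrite ffunE; case: eqP => [->|].
by move=> j hj; rewrite mxE eq_sym (negbTE hj) mul0r.
Qed.

Lemma op_atC (A C : 'M[F]_d) (k l : 'I_n) (psi : tens F n d) : k != l ->
  op_at A k (op_at C l psi) = op_at C l (op_at A k psi).
Proof.
move=> h; have h' : l != k by rewrite eq_sym.
apply/ffunP=> x; rewrite !ffunE.
under eq_bigr => j _ do rewrite ffunE (upd_neq _ _ h') big_distrr /=.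
under [RHS]eq_bigr => j _ do rewrite ffunE (upd_neq _ _ h) big_distrr /=.
rewrite exchange_big /=; apply: eq_bigr => j _; apply: eq_bigr => m _.
rewrite upd_comm // !mulrA; congr (_ * _); exact: mulrC.
Qed.

Lemma Pm_op (X : 'M[F]_d) (s : 'S_n) (k : 'I_n) (psi : tens F n d) :
  Pm s (op_at X k psi) = op_at X (s k) (Pm s psi).
Proof.
apply/ffunP=> x; rewrite !ffunE; apply: eq_bigr => j _.
rewrite !ffunE; congr (_ * psi _); apply/ffunP=> i; rewrite !ffunE.
by rewrite (inj_eq perm_inj).
Qed.

Lemma Pm_sym (s : 'S_n) (psi : tens F n d) : symmetric_tens psi -> Pm s psi = psi.
Proof. by move=> h; apply/ffunP=> x; rewrite ffunE h. Qed.

Lemma sym_Pm (psi : tens F n d) : (forall s, Pm s psi = psi) -> symmetric_tens psi.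
Proof. by move=> h s x; rewrite -{2}(h s) ffunE. Qed.
End Aux.

Theorem lemma1 (R : realType) (n d : nat) (hn : (2 <= n)%N)
    (k1 k2 : 'I_n) (hk1 : val k1 = 0%N) (hk2 : val k2 = 1%N)
    (psi : tens (complex R) n d) (B : 'M[complex R]_d) :
  symmetric_tens psi -> B \in unitmx ->
  (op_at B k1 (op_at (invmx B) k2 psi) = psi <-> symmetric_tens (op_at B k1 psi)).
Proof.
move=> hs hB.
have hk : k1 != k2 by apply/eqP => e; move: hk1 hk2; rewrite e => ->.
have key : forall s : 'S_n, Pm s (op_at B k1 psi) = op_at B (s k1) psi.
  by move=> s; rewrite Pm_op Pm_sym.
split => [H|H].
- have E : op_at B k1 psi = op_at B k2 psi.
    rewrite -{2}H op_atC 1?eq_sym // op_atM.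
    by rewrite op_atC ?op_atM ?mulmxV // op_at1.
  apply: sym_Pm => s; rewrite key.
  suff all : forall k, op_at B k psi = op_at B k1 psi by rewrite all.
  move=> k; case: (eqVneq k k1) => [->//|nk1].
  case: (eqVneq k k2) => [->|nk2]; first by rewrite E.
  have := key (tperm k1 k); rewrite tpermL => <-.
  rewrite E Pm_op Pm_sym // tpermD // 1?eq_sym //.
- have E : op_at B k1 psi = op_at B k2 psi.
    have := key (tperm k1 k2); rewrite tpermL => <-.
    by rewrite Pm_sym //; apply: H.
  by rewrite op_atC // E op_atM mulVmx // op_at1.
Qed.
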